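(* Let $A$ be a commutative ring, $\sigma$ a hereditary torsion theory on $A$-modules, $\mathfrak{a}\subseteq A$ an ideal and $p:A\to A/\mathfrak{a}$ the canonical projection. Then $A$ is totally $\sigma$-artinian if and only if $\mathfrak{a}$ is a totally $\sigma$-artinian $A$-module and $A/\mathfrak{a}$ is a totally $\sigma$-artinian $A$-module (equivalently, the ring $A/\mathfrak{a}$ is totally $p(\sigma)$-artinian).
   Context: $\mathcal{L}(\sigma)$ is the Gabriel filter of $\sigma$. An $A$-module $M$ is totally $\sigma$-artinian if for every descending chain of submodules $N_1\supseteq N_2\supseteq\cdots$ there exist $m$ and $\mathfrak{h}\in\mathcal{L}(\sigma)$ with $N_m\mathfrak{h}\subseteq N_s$ for all $s\ge m$; the ring $A$ is totally $\sigma$-artinian if $A$ is so as an $A$-module. $p(\sigma)$ is the hereditary torsion theory on $A/\mathfrak{a}$-modules with Gabriel filter $\{\mathfrak{b}: p^{-1}(\mathfrak{b})\in\mathcal{L}(\sigma)\}$, and the ring $A/\mathfrak{a}$ is totally $p(\sigma)$-artinian if the analogous chain condition holds for its ideals with $\mathfrak{h}\in\mathcal{L}(p(\sigma))$. *)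

(* Defs.v *)
From mathcomp Require Import all_boot all_algebra.
From Stdlib Require Import ClassicalEpsilon.
Set Implicit Arguments. Unset Strict Implicit. Unset Printing Implicit Defensive.
Import GRing.Theory.
Local Open Scope ring_scope.

(* Submodules: subsets containing 0, closed under
   + and under scalar action (closure under negation follows by acting with -1). *)
Definition is_submodule (S M : Type) (z : M) (add : M -> M -> M)
  (act : S -> M -> M) (N : M -> Prop) : Prop :=
  [/\ N z, (forall x y, N x -> N y -> N (add x y))
    & (forall r x, N x -> N (act r x))].

(* Totally sigma-artinian, sigma given by its Gabriel filter F (a set of ideals
   of the scalar ring).  "N_m h ⊆ N_s" (N_m h = submodule generated by the
   products r x, r in h, x in N_m) is written out: every such product lies in N_s. *)
Definition totally_artinian (S M : Type) (F : (S -> Prop) -> Prop)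
  (z : M) (add : M -> M -> M) (act : S -> M -> M) : Prop :=
  forall N : nat -> M -> Prop,
    (forall n, is_submodule z add act (N n)) ->
    (forall n x, N n.+1 x -> N n x) ->
    exists m, exists h, F h /\
      forall s, (m <= s)%N -> forall r x, h r -> N m x -> N s (act r x).

Section Ring.
Variable A : comPzRingType.

Definition is_ideal (a : A -> Prop) : Prop := is_submodule 0 +%R *%R a.

(* Gabriel filter (Stenström, Ch. VI): the filter L(sigma) of a hereditary
   torsion theory sigma on A-Mod; these correspond bijectively to sigma. *)
Definition gabriel_filter (F : (A -> Prop) -> Prop) : Prop :=
  (forall b, F b -> is_ideal b) /\
  F (fun _ => True) /\
  (forall b c, F b -> is_ideal c -> (forall x, b x -> c x) -> F c) /\
  (forall b c, F b -> F c -> F (fun x => b x /\ c x)) /\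
  (forall b x, F b -> F (fun y => b (y * x))) /\
  (forall b c, is_ideal c -> F b ->
     (forall x, b x -> F (fun y => c (y * x))) -> F c).

Definition tsa_ring (F : (A -> Prop) -> Prop) : Prop :=
  totally_artinian F 0 +%R *%R.

Section IdealModule.
Variables (a : A -> Prop) (ha : is_ideal a).
Definition idl := {x : A | a x}.
Definition idl_zero : idl.
Proof. exists 0; by case: ha. Defined.
Definition idl_add (x y : idl) : idl.
Proof. exists (proj1_sig x + proj1_sig y); case: ha => _ H _; apply: H; exact: proj2_sig. Defined.
Definition idl_act (r : A) (x : idl) : idl.
Proof. exists (r * proj1_sig x); case: ha => _ _ H; apply: H; exact: proj2_sig. Defined.
End IdealModule.

Definition tsa_ideal (F : (A -> Prop) -> Prop) (a : A -> Prop) (ha : is_ideal a) : Prop :=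
  totally_artinian F (idl_zero ha) (@idl_add a ha) (@idl_act a ha).

Section Quotient.
Variable a : A -> Prop.
Definition coset (x : A) : A -> Prop := fun y => a (y - x).
Definition quot := {C : A -> Prop | exists x, C = coset x}.
Definition qp (x : A) : quot := exist _ (coset x) (ex_intro _ x erefl).
Definition qrep (C : quot) : A :=
  proj1_sig (constructive_indefinite_description _ (proj2_sig C)).
Definition q_zero : quot := qp 0.
Definition q_add (C D : quot) : quot := qp (qrep C + qrep D).
Definition q_act (r : A) (C : quot) : quot := qp (r * qrep C).
Definition q_mul (C D : quot) : quot := qp (qrep C * qrep D).
(* Gabriel filter of p(sigma) on A/a-modules. *)
Definition pfilter (F : (A -> Prop) -> Prop) : (quot -> Prop) -> Prop :=
  fun b => is_submodule q_zero q_add q_mul b /\ F (fun x => b (qp x)).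
End Quotient.

Definition tsa_quot_module (F : (A -> Prop) -> Prop) (a : A -> Prop) : Prop :=
  totally_artinian F (q_zero a) (@q_add a) (@q_act a).

Definition tsa_quot_ring (F : (A -> Prop) -> Prop) (a : A -> Prop) : Prop :=
  totally_artinian (pfilter F) (q_zero a) (@q_add a) (@q_mul a).
End Ring.

(* Main.v *)
Require Import Defs.
From mathcomp Require Import all_boot all_algebra.
From Stdlib Require Import ClassicalEpsilon ProofIrrelevance FunctionalExtensionality PropExtensionality.
Import GRing.Theory.

Section L.
Local Open Scope ring_scope.
Variable A : comPzRingType.
Variable a : A -> Prop.
Hypothesis ha : is_ideal a.

Lemma ideal0 : a 0. Proof. by case: ha. Qed.
Lemma idealD x y : a x -> a y -> a (x + y). Proof. by case: ha => _ H _; apply: H. Qed.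
Lemma idealM r x : a x -> a (r * x). Proof. by case: ha => _ _ H; apply: H. Qed.
Lemma idealN x : a x -> a (- x). Proof. by move=> h; rewrite -mulN1r; apply: idealM. Qed.

Lemma quot_eq (C D : quot a) : proj1_sig C = proj1_sig D -> C = D.
Proof.
case: C => [C pC]; case: D => [D pD] /= e; subst D; f_equal; apply: proof_irrelevance.
Qed.

Lemma qp_eq x y : a (x - y) -> qp a x = qp a y.
Proof.
move=> h; apply: quot_eq => /=; apply: functional_extensionality => z.
apply: propositional_extensionality; rewrite /coset; split => H.
- have -> : z - y = (z - x) + (x - y) by rewrite addrA subrK.
  exact: idealD.
- have -> : z - x = (z - y) - (x - y) by rewrite opprB addrA subrK.
  by apply: idealD => //; apply: idealN.
Qed.

Lemma qrep_coset (C : quot a) : proj1_sig C = coset a (qrep C).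
Proof. by rewrite /qrep; case: (constructive_indefinite_description _ _). Qed.

Lemma qp_qrep (C : quot a) : qp a (qrep C) = C.
Proof. by apply: quot_eq => /=; rewrite -qrep_coset. Qed.

Lemma qp_inj x y : qp a x = qp a y -> a (x - y).
Proof.
move/(f_equal (@proj1_sig _ _)) => /= e.
have : coset a x x by rewrite /coset subrr; exact: ideal0.
by rewrite e.
Qed.

Lemma qrep_qp x : a (qrep (qp a x) - x).
Proof. by apply: qp_inj; rewrite qp_qrep. Qed.

Lemma q_add_qp x y : q_add (qp a x) (qp a y) = qp a (x + y).
Proof. apply: qp_eq; rewrite opprD addrACA; apply: idealD; exact: qrep_qp. Qed.

Lemma q_act_qp r x : q_act r (qp a x) = qp a (r * x).
Proof. apply: qp_eq; rewrite -mulrBr; apply: idealM; exact: qrep_qp. Qed.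

Lemma q_act_mul r (D : quot a) : q_act r D = q_mul (qp a r) D.
Proof.
apply: qp_eq; rewrite -mulrBl mulrC; apply: idealM.
rewrite -opprB; apply: idealN; exact: qrep_qp.
Qed.

Variable F : (A -> Prop) -> Prop.
Hypothesis hF : gabriel_filter F.

Lemma colon_ideal (c : A -> Prop) x : is_ideal c -> is_ideal (fun y => c (y * x)).
Proof.
case=> c0 cD cM; split.
- by rewrite mul0r.
- by move=> y z h1 h2; rewrite /= mulrDl; apply: cD.
- by move=> r y h; rewrite /= -mulrA; apply: cM.
Qed.

Lemma part2a : tsa_quot_module F a -> tsa_quot_ring F a.
Proof.
move=> H N Nsub Ndec.
have Nsub' : forall n, is_submodule (q_zero a) (@q_add _ a) (@q_act _ a) (N n).
  move=> n; case: (Nsub n) => h0 hD hM; split => // r x Hx.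
  by rewrite q_act_mul; apply: hM.
have [m [h [Fh Hh]]] := H N Nsub' Ndec.
case: hF => hI [_ [hU _]].
have [h0 hD hM] := hI _ Fh.
exists m, (fun C => exists r, h r /\ C = qp a r); split.
- split.
  + split.
    * by exists 0.
    * by move=> x y [r1 [e1 ->]] [r2 [e2 ->]]; exists (r1 + r2); rewrite q_add_qp; split => //; apply: hD.
    * move=> r x [y [hy ->]]; exists (qrep r * y); split; first exact: hM.
      by change (q_act (qrep r) (qp a y) = qp a (qrep r * y)); rewrite q_act_qp.
  + apply: (hU h) => //; last by move=> x hx; exists x.
    split.
    * by exists 0.
    * move=> x y [r1 [e1 E1]] [r2 [e2 E2]]; exists (r1 + r2); split; first exact: hD.
      by rewrite -!q_add_qp E1 E2.
    * move=> r x [r1 [e1 E1]]; exists (r * r1); split; first exact: hM.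
      by rewrite -!q_act_qp E1.
- move=> s hs C D [r [hr ->]] HD; rewrite -q_act_mul; exact: Hh.
Qed.

Lemma part2b : tsa_quot_ring F a -> tsa_quot_module F a.
Proof.
move=> H N Nsub Ndec.
have Nsub' : forall n, is_submodule (q_zero a) (@q_add _ a) (@q_mul _ a) (N n).
  by move=> n; case: (Nsub n) => h0 hD hM; split => // r x Hx; apply: hM.
have [m [b [[_ Fb] Hb]]] := H N Nsub' Ndec.
exists m, (fun x => b (qp a x)); split => // s hs r C hr HC.
rewrite q_act_mul; exact: Hb.
Qed.

Lemma idl_eq (u v : {x : A | a x}) : proj1_sig u = proj1_sig v -> u = v.
Proof. case: u => u pu; case: v => v pv /= e; subst v; f_equal; apply: proof_irrelevance. Qed.

Lemma part1a : tsa_ring F -> tsa_ideal F ha.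
Proof.
move=> H K Ksub Kdec.
pose N n x := exists p : a x, K n (exist _ x p).
have NK : forall n (u : {x : A | a x}), N n (proj1_sig u) <-> K n u.
  move=> n u; split; first by case=> p; rewrite (@idl_eq (exist _ _ p) u).
  by move=> Ku; exists (proj2_sig u); rewrite (@idl_eq (exist _ _ _) u).
have Nsub : forall n, is_submodule 0 +%R *%R (N n).
  move=> n; case: (Ksub n) => k0 kD kM; split.
  - exact: ((NK n (idl_zero ha)).2 k0).
  - move=> x y [p Kx] [q Ky].
    exact: ((NK n (idl_add ha (exist _ x p) (exist _ y q))).2 (kD _ _ Kx Ky)).
  - move=> r x [p Kx]; exact: ((NK n (idl_act ha r (exist _ x p))).2 (kM r _ Kx)).
have Ndec : forall n x, N n.+1 x -> N n x by move=> n x [p Kx]; exists p; apply: Kdec.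
have [m [h [Fh Hh]]] := H N Nsub Ndec.
exists m, h; split => // s hs r u hr Ku.
apply/NK; exact: (Hh s hs r (proj1_sig u) hr ((NK m u).2 Ku)).
Qed.

Lemma part1b : tsa_ring F -> tsa_quot_module F a.
Proof.
move=> H Q Qsub Qdec.
pose N n x := Q n (qp a x).
have Nsub : forall n, is_submodule 0 +%R *%R (N n).
  move=> n; case: (Qsub n) => k0 kD kM; split.
  - exact: k0.
  - by move=> x y Hx Hy; rewrite /N -q_add_qp; apply: kD.
  - by move=> r x Hx; rewrite /N -q_act_qp; apply: kM.
have Ndec : forall n x, N n.+1 x -> N n x by move=> n x; apply: Qdec.
have [m [h [Fh Hh]]] := H N Nsub Ndec.
exists m, h; split => // s hs r C hr QC.
have := Hh s hs r (qrep C) hr; rewrite /N qp_qrep => /(_ QC).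
by rewrite -q_act_qp qp_qrep.
Qed.

Lemma part1c : tsa_ideal F ha -> tsa_quot_module F a -> tsa_ring F.
Proof.
move=> HI HQ N Nsub Ndec.
have Nmono : forall i j x, (i <= j)%N -> N j x -> N i x.
  move=> i j x /subnK <-; elim: (j - i)%N => [|k IH] //= Hk.
  by apply: IH; apply: Ndec; rewrite addSn in Hk.
pose K n (u : {x : A | a x}) := N n (proj1_sig u).
have Ksub : forall n, is_submodule (idl_zero ha) (idl_add ha) (idl_act ha) (K n).
  move=> n; case: (Nsub n) => k0 kD kM; split.
  - exact: k0.
  - by move=> x y Hx Hy; apply: kD.
  - by move=> r x Hx; apply: kM.
have [m2 [h2 [Fh2 H2]]] := HI K Ksub (fun n u => Ndec n _).
pose Q n C := exists x, N n x /\ C = qp a x.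
have Qsub : forall n, is_submodule (q_zero a) (@q_add _ a) (@q_act _ a) (Q n).
  move=> n; case: (Nsub n) => k0 kD kM; split.
  - by exists 0.
  - move=> x y [x1 [n1 ->]] [y1 [n2 ->]]; exists (x1 + y1); rewrite q_add_qp; split => //.
    exact: kD.
  - move=> r x [x1 [n1 ->]]; exists (r * x1); rewrite q_act_qp; split => //; exact: kM.
have Qdec : forall n C, Q n.+1 C -> Q n C.
  by move=> n C [x [Nx ->]]; exists x; split => //; apply: Ndec.
have [m1 [h1 [Fh1 H1]]] := HQ Q Qsub Qdec.
pose m := maxn m1 m2.
pose c y := forall s, (m <= s)%N -> forall x, N m x -> N s (y * x).
case: hF => hI [_ [hU [_ [_ h6]]]].
have cI : is_ideal c.
  split.
  - by move=> s hs x _; rewrite mul0r; case: (Nsub s).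
  - move=> y z Hy Hz s hs x Hx; rewrite mulrDl; case: (Nsub s) => _ kD _.
    by apply: kD; [apply: Hy|apply: Hz].
  - move=> r y Hy s hs x Hx; rewrite -mulrA; case: (Nsub s) => _ _ kM.
    by apply: kM; apply: Hy.
have Fc : F c.
  apply: (h6 h1 c cI Fh1) => x hx.
  apply: (hU h2) => //; first exact: colon_ideal.
  move=> y hy s hs n Hn.
  have hs1 : (m1 <= s)%N by apply: leq_trans hs; apply: leq_maxl.
  have hs2 : (m2 <= s)%N by apply: leq_trans hs; apply: leq_maxr.
  have [z [Nz Ez]] : Q s (q_act x (qp a n)).
    apply: H1 => //; exists n; split => //.
    by apply: (Nmono _ m) => //; apply: leq_maxl.
  rewrite q_act_qp in Ez; have aw := qp_inj _ _ Ez.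
  case: (Nsub m) => _ mD mM.
  have Nw : N m (x * n - z).
    apply: mD; first exact: mM.
    rewrite -mulN1r; apply: mM; exact: (Nmono m s).
  have := H2 s hs2 y (exist _ _ aw) hy.
  have Kw : K m2 (exist _ _ aw) by rewrite /K /=; apply: (Nmono _ m) => //; apply: leq_maxr.
  move=> /(_ Kw); rewrite /K /= => Nyw.
  case: (Nsub s) => _ sD sM.
  have -> : y * x * n = y * (x * n - z) + y * z by rewrite -mulrDr subrK mulrA.
  by apply: sD => //; apply: sM.
exists m, c; split => // s hs r x hr hx; exact: hr s hs x hx.
Qed.

End L.

Theorem mainTheorem11 (A : comPzRingType) (F : (A -> Prop) -> Prop)
  (hF : gabriel_filter F) (a : A -> Prop) (ha : is_ideal a) :
  (tsa_ring F <-> tsa_ideal F ha /\ tsa_quot_module F a) /\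
  (tsa_quot_module F a <-> tsa_quot_ring F a).
Proof.
split; last by split; [apply: part2a | apply: part2b].
split; first by move=> H; split; [apply: part1a | apply: part1b].
by case=> H1 H2; exact: (@part1c A a ha F hF H1 H2).
Qed.
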